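(* $\widehat{R}_{4/4,5}=-x^*\approx 3.743299247$, where $x^*$ is the smallest real root of \[ x^{12}+12x^{11}+48x^{10}-32x^9-864x^8-2016x^7+2784x^6+13248x^5-9072x^4-35136x^3+44928x^2-20736x+3456=0. \] (The class $\widehat{\Pi}_{4/4,5}$ consists of exactly four functions of the form $\frac{a_4z^4+a_3z^3+a_2z^2+a_1z+1}{(1-az)^4}$, with $a$ ranging over the four real roots of $120a^4-240a^3+120a^2-20a+1=0$; the value $-x^*$ is attained when $a$ is the smallest of these roots.)
   Context: A real rational function $\psi$ is always considered in lowest terms, as a smooth function on $\mathbb{R}$ minus its finitely many poles. It is absolutely monotonic at $x\in\mathbb{R}$ if $x$ is not a pole and $\psi^{(k)}(x)\ge 0$ for all integers $k\ge 0$. The radius of absolute monotonicity is $R(\psi)=\sup\big(\{r\in[0,\infty): \psi \text{ is absolutely monotonic at each point of } [-r,0]\}\cup\{0\}\big)\in[0,+\infty]$. $\widehat{\Pi}_{s/s,p}$ denotes the set of real rational functions $\psi(z)=P(z)/(1-az)^s$ with $P$ a real polynomial of degree at most $s$ and $a\in\mathbb{R}$, such that $\psi(z)-e^z=O(z^{p+1})$ as $z\to0$. Finally, $\widehat{R}_{s/s,p}=\sup\{R(\psi):\psi\in\widehat{\Pi}_{s/s,p}\}$. *)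

(* Defs.v *)
From Stdlib Require Import Reals Lra.
Open Scope R_scope.

Definition poly_eval (c : nat -> R) (s : nat) (z : R) : R :=
  sum_f_R0 (fun i => c i * z ^ i) s.

(* The rational function psi = N / Dn (N, Dn arbitrary real functions; used with
   polynomials).  psi, taken in lowest terms, is absolutely monotonic at x iff
   x is not a pole and all derivatives of psi at x are >= 0.  "x not a pole" is
   expressed by: near x, psi coincides (off the zeros of Dn) with a function
   having derivatives of all orders on a neighbourhood of x; F k is the k-th
   derivative.  This is exactly the lowest-terms function (removable
   singularities are filled in; genuine poles are excluded). *)
Definition abs_mono_at (N Dn : R -> R) (x : R) : Prop :=
  exists delta : R, 0 < delta /\
  exists F : nat -> R -> R,
    (forall y, Rabs (y - x) < delta -> Dn y <> 0 -> F 0%nat y = N y / Dn y) /\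
    (forall (k : nat) y, Rabs (y - x) < delta ->
        derivable_pt_lim (F k) y (F (S k) y)) /\
    (forall k : nat, 0 <= F k x).

Definition abs_mono_on (N Dn : R -> R) (r : R) : Prop :=
  forall x, -r <= x <= 0 -> abs_mono_at N Dn x.

Definition in_Pihat (s p : nat) (c : nat -> R) (a : R) : Prop :=
  exists C eta : R, 0 < eta /\
    forall z, Rabs z < eta -> 1 - a * z <> 0 ->
      Rabs (poly_eval c s z / (1 - a * z) ^ s - exp z) <= C * Rabs z ^ (S p).

(* The set whose supremum is \hat R_{s/s,p}:
   {0} union { r >= 0 | some psi in \hat Pi_{s/s,p} is abs. monotonic on [-r,0] }.
   Since sup_psi sup_r = sup of the union, \hat R_{s/s,p} = sup of this set. *)
Definition Rhat_set (s p : nat) (r : R) : Prop :=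
  r = 0 \/
  (0 <= r /\ exists (c : nat -> R) (a : R),
      in_Pihat s p c a /\
      abs_mono_on (poly_eval c s) (fun z => (1 - a * z) ^ s) r).

Definition q12 (x : R) : R :=
  x^12 + 12*x^11 + 48*x^10 - 32*x^9 - 864*x^8 - 2016*x^7 + 2784*x^6
  + 13248*x^5 - 9072*x^4 - 35136*x^3 + 44928*x^2 - 20736*x + 3456.

(* Main.v *)
Require Import Defs.
From Stdlib Require Import Reals QArith Qreals List Lra Factorial.
From Coquelicot Require Import Coquelicot.
Import ListNotations.
Open Scope R_scope.

Fixpoint hev (l : list R) (x : R) : R :=
  match l with nil => 0 | c :: l' => c + x * hev l' x end.

Fixpoint hevQ (l : list Q) (x : Q) : Q :=
  match l with nil => 0%Q | c :: l' => (c + x * hevQ l' x)%Q end.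

Fixpoint addP (l m : list Q) : list Q :=
  match l, m with
  | nil, _ => m | _, nil => l
  | a :: l', b :: m' => Qred (a + b) :: addP l' m' end.

Fixpoint scaleP (c : Q) (l : list Q) : list Q :=
  match l with nil => nil | a :: l' => Qred (c * a) :: scaleP c l' end.

Fixpoint shiftP (c : Q) (l : list Q) : list Q :=
  match l with
  | nil => nil
  | a :: l' => let s := shiftP c l' in addP (a :: nil) (addP (scaleP c s) (0%Q :: s))
  end.

Fixpoint negP (l : list Q) : list Q :=
  match l with nil => nil | a :: l' => a :: map Qopp (negP l') end.

Definition qpos (q : Q) : bool := negb (Qle_bool q 0).

Fixpoint loQ (l : list Q) (d : Q) : Q :=
  match l with
  | nil => 0%Q
  | c :: l' => let m := Qred (d * loQ l' d) in Qred (c + (if Qle_bool 0 m then 0 else m))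
  end.

Fixpoint check_pos (p : list Q) (l u : Q) (n : nat) : bool :=
  qpos (loQ (shiftP l p) (u - l)) ||
  match n with
  | O => false
  | S n' => let m := Qred ((l + u) / 2) in check_pos p l m n' && check_pos p m u n'
  end.

Fixpoint allnonneg (l : list Q) : bool :=
  match l with nil => true | a :: l' => Qle_bool 0 a && allnonneg l' end.

Definition check_ge (p : list Q) (l : Q) : bool :=
  match shiftP l p with nil => false | a :: r => qpos a && allnonneg r end.

Lemma Q2R_red q : Q2R (Qred q) = Q2R q.
Proof. apply Qeq_eqR, Qred_correct. Qed.

Notation RP l := (map Q2R l).

Lemma hev_addP l m x : hev (RP (addP l m)) x = hev (RP l) x + hev (RP m) x.
Proof.
  revert m; induction l as [|a l IH]; intros [|b m]; cbn [addP map hev]; try ring.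
  rewrite Q2R_red, Q2R_plus, IH; ring.
Qed.

Lemma hev_scaleP c l x : hev (RP (scaleP c l)) x = Q2R c * hev (RP l) x.
Proof.
  induction l as [|a l IH]; cbn [scaleP map hev]; try ring.
  rewrite Q2R_red, Q2R_mult, IH; ring.
Qed.

Lemma hev_shiftP c l t : hev (RP (shiftP c l)) t = hev (RP l) (Q2R c + t).
Proof.
  induction l as [|a l IH]; [simpl; ring|].
  cbn [shiftP]. rewrite !hev_addP, hev_scaleP. simpl. rewrite RMicromega.Q2R_0, IH. ring.
Qed.

Lemma hev_negP l t : hev (RP (negP l)) t = hev (RP l) (- t).
Proof.
  induction l as [|a l IH]; simpl; try ring.
  assert (H : forall m, hev (RP (map Qopp m)) t = - hev (RP m) t).
  { induction m as [|b m IHm]; simpl; try ring. rewrite Q2R_opp, IHm. ring. }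
  rewrite H, IH. ring.
Qed.

Lemma qpos_ok q : qpos q = true -> 0 < Q2R q.
Proof.
  unfold qpos. destruct (Qle_bool q 0) eqn:E; simpl; try discriminate.
  intros _. apply Rnot_le_lt. intro H. rewrite <- RMicromega.Q2R_0 in H.
  apply Rle_Qle in H. apply Qle_bool_iff in H. congruence.
Qed.

Lemma Qle_bool_R a b : Qle_bool a b = true -> Q2R a <= Q2R b.
Proof. intro H. apply Qle_Rle, Qle_bool_iff, H. Qed.

Lemma Qle_bool_R_false a b : Qle_bool a b = false -> Q2R b < Q2R a.
Proof.
  intro H. apply Rnot_le_lt. intro H'. apply Rle_Qle, Qle_bool_iff in H'. congruence.
Qed.

Lemma loQ_ok l d t : 0 <= t <= Q2R d -> Q2R (loQ l d) <= hev (RP l) t.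
Proof.
  intros [H0 H1]. induction l as [|c l IH]; cbn [loQ map hev].
  - rewrite RMicromega.Q2R_0; lra.
  - rewrite Q2R_red, Q2R_plus. apply Rplus_le_compat_l.
    set (L := loQ l d) in *.
    destruct (Qle_bool 0 (Qred (d * L))) eqn:E.
    + rewrite RMicromega.Q2R_0.
      destruct (Rle_dec 0 (Q2R L)) as [h|h].
      * apply Rmult_le_pos; lra.
      * apply Qle_bool_R in E. rewrite RMicromega.Q2R_0, Q2R_red, Q2R_mult in E.
        assert (Q2R d = 0 \/ 0 < Q2R d) as [hd|hd] by lra.
        -- assert (t = 0) by lra. subst. lra.
        -- exfalso. assert (0 < Q2R d * (- Q2R L)) by (apply Rmult_lt_0_compat; lra). lra.
    + apply Qle_bool_R_false in E. rewrite RMicromega.Q2R_0, Q2R_red, Q2R_mult in E.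
      rewrite Q2R_red, Q2R_mult.
      assert (Q2R L < 0).
      { destruct (Rle_dec 0 (Q2R L)) as [h|h]; [|lra].
        assert (0 <= Q2R d * Q2R L) by (apply Rmult_le_pos; lra). lra. }
      apply Rle_trans with (t * Q2R L).
      * assert (0 <= (Q2R d - t) * (- Q2R L)) by (apply Rmult_le_pos; lra). nra.
      * apply Rmult_le_compat_l; lra.
Qed.

Lemma check_pos_ok p n : forall l u, check_pos p l u n = true ->
  forall x, Q2R l <= x <= Q2R u -> 0 < hev (RP p) x.
Proof.
  induction n as [|n IH]; intros l u H x Hx; cbn [check_pos] in H.
  - rewrite orb_false_r in H. apply qpos_ok in H.
    replace x with (Q2R l + (x - Q2R l)) by ring. rewrite <- hev_shiftP.
    eapply Rlt_le_trans; [apply H|]. apply loQ_ok. rewrite Q2R_minus. lra.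
  - apply orb_true_iff in H. destruct H as [H|H].
    + apply qpos_ok in H.
      replace x with (Q2R l + (x - Q2R l)) by ring. rewrite <- hev_shiftP.
      eapply Rlt_le_trans; [apply H|]. apply loQ_ok. rewrite Q2R_minus. lra.
    + apply andb_true_iff in H. destruct H as [H1 H2].
      destruct (Rle_dec x (Q2R (Qred ((l + u) / 2)))).
      * eapply IH; [apply H1|]. lra.
      * eapply IH; [apply H2|]. lra.
Qed.

Lemma allnonneg_ok l t : allnonneg l = true -> 0 <= t -> 0 <= hev (RP l) t.
Proof.
  intros H Ht; induction l as [|a l IH]; simpl in *; [lra|].
  apply andb_true_iff in H; destruct H as [H1 H2]. apply Qle_bool_R in H1.
  rewrite RMicromega.Q2R_0 in H1. specialize (IH H2).
  assert (0 <= t * hev (RP l) t) by (apply Rmult_le_pos; lra). lra.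
Qed.

Lemma check_ge_ok p l : check_ge p l = true -> forall x, Q2R l <= x -> 0 < hev (RP p) x.
Proof.
  unfold check_ge. intros H x Hx.
  replace x with (Q2R l + (x - Q2R l)) by ring. rewrite <- hev_shiftP.
  destruct (shiftP l p) as [|a r]; [discriminate|].
  apply andb_true_iff in H; destruct H as [H1 H2]. apply qpos_ok in H1. simpl.
  pose proof (allnonneg_ok r (x - Q2R l) H2 ltac:(lra)).
  assert (0 <= (x - Q2R l) * hev (RP r) (x - Q2R l)) by (apply Rmult_le_pos; lra). lra.
Qed.

Lemma check_le_ok p l : check_ge (negP p) (- l) = true -> forall x, x <= Q2R l -> 0 < hev (RP p) x.
Proof.
  intros H x Hx. replace x with (- - x) by ring. rewrite <- hev_negP.
  apply (check_ge_ok _ _ H). rewrite Q2R_opp. lra.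
Qed.

Fixpoint chk_list (p : list Q) (l0 : Q) (pts : list Q) (u : Q) : bool :=
  match pts with
  | nil => false
  | b :: nil => check_pos p l0 b 0 && Qle_bool u b
  | b :: r => check_pos p l0 b 0 && chk_list p b r u
  end.

Lemma chk_list_ok p pts : forall l0 u, chk_list p l0 pts u = true ->
  forall x, Q2R l0 <= x <= Q2R u -> 0 < hev (RP p) x.
Proof.
  induction pts as [|b r IH]; intros l0 u H x Hx; [discriminate|].
  destruct r as [|b' r'].
  - apply andb_true_iff in H; destruct H as [H1 H2]. apply Qle_bool_R in H2.
    eapply check_pos_ok; [apply H1|]. lra.
  - change (check_pos p l0 b 0 && chk_list p b (b' :: r') u = true) in H.
    apply andb_true_iff in H; destruct H as [H1 H2].
    destruct (Rle_dec x (Q2R b)).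
    + eapply check_pos_ok; [apply H1|]. lra.
    + eapply IH; [apply H2|]. lra.
Qed.

Definition B0 (a : R) := 388/3 - 1220*a + 2880*a^2 - 1520*a^3.
Definition B1 (a : R) := -1940/3 + 6100*a - 14400*a^2 + 7600*a^3.
Definition B2 (a : R) := 1230 - 11580*a + 27300*a^2 - 14400*a^3.
Definition B3 (a : R) := -3160/3 + 9860*a - 23160*a^2 + 12200*a^3.
Definition B4 (a : R) := 1025/3 - 3160*a + 7380*a^2 - 3880*a^3.

Definition Fk (a : R) (k : nat) (y : R) : R :=
  a^k * (B1 a * INR (fact k) / (1-a*y)^(S k)
       + B2 a * INR (fact (S k)) / (1-a*y)^(S (S k))
       + B3 a * INR (fact (S (S k))) / 2 / (1-a*y)^(S (S (S k)))
       + B4 a * INR (fact (S (S (S k)))) / 6 / (1-a*y)^(S (S (S (S k)))))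
  + match k with O => B0 a | S _ => 0 end.

Lemma deriv_inv_pow (a C : R) (n : nat) y : 1 - a*y <> 0 ->
  derivable_pt_lim (fun y => C / (1 - a*y)^n) y (C * INR n * a / (1 - a*y)^(S n)).
Proof.
  intros H. apply is_derive_Reals. auto_derive.
  - apply pow_nonzero. lra.
  - change RinvImpl.Rinv with Rinv. destruct n as [|n].
    + simpl. field. lra.
    + cbn [Init.Nat.pred pow]. replace (1 + - (a*y)) with (1 - a*y) by ring.
      assert (Hp : (1 - a*y)^n <> 0) by (apply pow_nonzero; lra).
      set (p := (1 - a*y)^n) in *. field. lra.
Qed.

Lemma derivable_pt_lim_eq_value f y l l' : derivable_pt_lim f y l -> l = l' -> derivable_pt_lim f y l'.
Proof. intros H ->; exact H. Qed.

Lemma Fk_deriv a k y : 1 - a*y <> 0 -> derivable_pt_lim (Fk a k) y (Fk a (S k) y).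
Proof.
  intros H. unfold Fk.
  set (w := 1 - a*y).
  assert (D : derivable_pt_lim (fun y =>
     a^k * (B1 a * INR (fact k) / (1-a*y)^(S k)
       + B2 a * INR (fact (S k)) / (1-a*y)^(S (S k))
       + B3 a * INR (fact (S (S k))) / 2 / (1-a*y)^(S (S (S k)))
       + B4 a * INR (fact (S (S (S k)))) / 6 / (1-a*y)^(S (S (S (S k)))))
      + match k with O => B0 a | S _ => 0 end) y
     (a^k * (B1 a * INR (fact k) * INR (S k) * a / (1-a*y)^(S (S k))
       + B2 a * INR (fact (S k)) * INR (S (S k)) * a / (1-a*y)^(S (S (S k)))
       + B3 a * INR (fact (S (S k))) / 2 * INR (S (S (S k))) * a / (1-a*y)^(S (S (S (S k))))
       + B4 a * INR (fact (S (S (S k)))) / 6 * INR (S (S (S (S k)))) * a / (1-a*y)^(S (S (S (S (S k))))))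
      + 0)).
  { apply (derivable_pt_lim_plus (fun y => _) (fun _ => _)).
    2: apply derivable_pt_lim_const.
    apply (derivable_pt_lim_scal (fun y => _)).
    repeat apply (derivable_pt_lim_plus (fun y => _) (fun y => _));
      apply deriv_inv_pow; auto. }
  eapply derivable_pt_lim_eq_value; [exact D|].
  cbn [Fk]. unfold Fk.
  rewrite !fact_simpl, !mult_INR, !S_INR. cbn [pow].
  fold w in H |- *.
  assert (Hw : w^k <> 0) by (apply pow_nonzero; auto).
  set (p := w^k) in *. set (q := a^k). field. auto.
Qed.

Definition TT (a K w : R) : R :=
  B1 a * w^3 + B2 a * K * w^2 + B3 a * (K*(K+1)/2) * w + B4 a * (K*(K+1)*(K+2)/6).

Lemma Fk_TT a k y : 1 - a*y <> 0 ->
  Fk a k y = a^k * INR (fact k) / (1-a*y)^(S (S (S (S k)))) * TT a (INR k + 1) (1-a*y)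
             + match k with O => B0 a | S _ => 0 end.
Proof.
  intros H. unfold Fk, TT. set (w := 1 - a*y) in *.
  rewrite !fact_simpl, !mult_INR, !S_INR. cbn [pow].
  assert (Hw : w^k <> 0) by (apply pow_nonzero; auto).
  set (p := w^k) in *. set (q := a^k). field. auto.
Qed.

Lemma deriv_local f g y l eps : 0 < eps -> (forall z, Rabs (z - y) < eps -> f z = g z) ->
  derivable_pt_lim f y l -> derivable_pt_lim g y l.
Proof.
  intros He Hfg Hd e He'. destruct (Hd e He') as [d Hd'].
  assert (Hm : 0 < Rmin d eps) by (apply Rmin_pos; [apply cond_pos | auto]).
  exists (mkposreal _ Hm). intros h hne hlt. simpl in hlt.
  rewrite <- (Hfg (y+h)), <- (Hfg y).
  - apply Hd'; auto. eapply Rlt_le_trans; [apply hlt | apply Rmin_l].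
  - replace (y - y) with 0 by ring. rewrite Rabs_R0. auto.
  - replace (y + h - y) with h by ring. eapply Rlt_le_trans; [apply hlt | apply Rmin_r].
Qed.

Lemma uniq_chain (F G : nat -> R -> R) x d : 0 < d ->
  (forall y, Rabs (y - x) < d -> F 0%nat y = G 0%nat y) ->
  (forall k y, Rabs (y - x) < d -> derivable_pt_lim (F k) y (F (S k) y)) ->
  (forall k y, Rabs (y - x) < d -> derivable_pt_lim (G k) y (G (S k) y)) ->
  forall k y, Rabs (y - x) < d -> F k y = G k y.
Proof.
  intros Hd H0 HF HG k. induction k as [|k IH]; intros y Hy; auto.
  assert (He : 0 < d - Rabs (y - x)) by lra.
  assert (D : derivable_pt_lim (G k) y (F (S k) y)).
  { apply (deriv_local (F k) _ y _ _ He); [|apply HF; auto].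
    intros z Hz. apply IH.
    replace (z - x) with ((z - y) + (y - x)) by ring.
    eapply Rle_lt_trans; [apply Rabs_triang|]. lra. }
  eapply uniqueness_limite; [apply D | apply HG; auto].
Qed.

Lemma taylor_step (f g : R -> R) (n : nat) :
  f 0 = 0 -> (forall t, derivable_pt_lim f t (g t)) ->
  (forall t, Rabs t <= 1 -> Rabs (g t) <= 3 * Rabs t ^ n) ->
  forall z, Rabs z <= 1 -> Rabs (f z) <= 3 * Rabs z ^ (S n).
Proof.
  intros H0 Hd Hg z Hz.
  destruct (MVT_abs f g 0 z (fun c _ => Hd c)) as [c [Hc1 Hc2]].
  rewrite H0, Rminus_0_r, Rminus_0_r in Hc1. rewrite Hc1.
  assert (Hcz : Rabs c <= Rabs z).
  { unfold Rmin, Rmax in Hc2. destruct (Rle_dec 0 z);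
    unfold Rabs; destruct (Rcase_abs c); destruct (Rcase_abs z); lra. }
  assert (Hgc : Rabs (g c) <= 3 * Rabs z ^ n).
  { eapply Rle_trans; [apply Hg; lra|]. apply Rmult_le_compat_l; [lra|].
    apply pow_incr. split; [apply Rabs_pos | auto]. }
  simpl. rewrite (Rmult_comm (Rabs z)), <- Rmult_assoc.
  apply Rmult_le_compat_r; [apply Rabs_pos | auto].
Qed.

Definition E6 (z : R) := 1 + z + z^2/2 + z^3/6 + z^4/24 + z^5/120.

Lemma exp_taylor z : Rabs z <= 1 -> Rabs (exp z - E6 z) <= 3 * Rabs z ^ 6.
Proof.
  intros Hz.
  assert (H0 : forall t, Rabs t <= 1 -> Rabs (exp t) <= 3 * Rabs t ^ 0).
  { intros t Ht. rewrite Rabs_right by (left; apply exp_pos). simpl.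
    rewrite Rmult_1_r. eapply Rle_trans; [|apply exp_le_3].
    destruct (Rle_lt_or_eq_dec t 1) as [h|h]; [unfold Rabs in Ht; destruct (Rcase_abs t); lra| |].
    - left; apply exp_increasing; auto.
    - subst; lra. }
  assert (D : forall (f g : R -> R), (forall t, is_derive f t (g t)) -> forall t, derivable_pt_lim f t (g t)).
  { intros f g H t. apply is_derive_Reals. apply H. }
  assert (H1 := taylor_step (fun t => exp t - 1) exp 0).
  assert (H1' : forall z, Rabs z <= 1 -> Rabs (exp z - 1) <= 3 * Rabs z ^ 1).
  { apply H1; [rewrite exp_0; ring| |exact H0]. apply D. intros t. auto_derive; auto. ring. }
  assert (H2' : forall z, Rabs z <= 1 -> Rabs (exp z - 1 - z) <= 3 * Rabs z ^ 2).
  { apply (taylor_step _ (fun t => exp t - 1)); [rewrite exp_0; ring| |exact H1']. apply D. intros t. auto_derive; auto. ring. }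
  assert (H3' : forall z, Rabs z <= 1 -> Rabs (exp z - 1 - z - z^2/2) <= 3 * Rabs z ^ 3).
  { apply (taylor_step _ (fun t => exp t - 1 - t)); [rewrite exp_0; field| |exact H2']. apply D. intros t. auto_derive; auto. field. }
  assert (H4' : forall z, Rabs z <= 1 -> Rabs (exp z - 1 - z - z^2/2 - z^3/6) <= 3 * Rabs z ^ 4).
  { apply (taylor_step _ (fun t => exp t - 1 - t - t^2/2)); [rewrite exp_0; field| |exact H3']. apply D. intros t. auto_derive; auto. field. }
  assert (H5' : forall z, Rabs z <= 1 -> Rabs (exp z - 1 - z - z^2/2 - z^3/6 - z^4/24) <= 3 * Rabs z ^ 5).
  { apply (taylor_step _ (fun t => exp t - 1 - t - t^2/2 - t^3/6)); [rewrite exp_0; field| |exact H4']. apply D. intros t. auto_derive; auto. field. }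
  assert (H6' : forall z, Rabs z <= 1 -> Rabs (exp z - 1 - z - z^2/2 - z^3/6 - z^4/24 - z^5/120) <= 3 * Rabs z ^ 6).
  { apply (taylor_step _ (fun t => exp t - 1 - t - t^2/2 - t^3/6 - t^4/24)); [rewrite exp_0; field| |exact H5']. apply D. intros t. auto_derive; auto. field. }
  unfold E6. replace (exp z - (1 + z + z ^ 2 / 2 + z ^ 3 / 6 + z ^ 4 / 24 + z ^ 5 / 120)) with
    (exp z - 1 - z - z^2/2 - z^3/6 - z^4/24 - z^5/120) by ring. auto.
Qed.

Definition Qa (a : R) := 120*a^4 - 240*a^3 + 120*a^2 - 20*a + 1.
Definition e1 (a : R) := 1 - 4*a.
Definition e2 (a : R) := 1/2 - 4*a + 6*a^2.
Definition e3 (a : R) := 1/6 - 2*a + 6*a^2 - 4*a^3.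
Definition e4 (a : R) := 1/24 - 2/3*a + 3*a^2 - 4*a^3 + a^4.
Definition e6 (a : R) := -1/30*a + 1/4*a^2 - 2/3*a^3 + 1/2*a^4.
Definition e7 (a : R) := 1/20*a^2 - 1/6*a^3 + 1/6*a^4.
Definition e8 (a : R) := -1/30*a^3 + 1/24*a^4.
Definition e9 (a : R) := 1/120*a^4.
Definition Rr (a z : R) := e6 a + z*(e7 a + z*(e8 a + z*e9 a)).

Definition cc (a : R) (n : nat) : R :=
  match n with 0%nat => 1 | 1%nat => e1 a | 2%nat => e2 a | 3%nat => e3 a | _ => e4 a end.

Lemma poly_eval4 c y : poly_eval c 4 y = c 0%nat + c 1%nat * y + c 2%nat * y^2 + c 3%nat * y^3 + c 4%nat * y^4.
Proof. unfold poly_eval. simpl. ring. Qed.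

Lemma ident_D c a z : poly_eval c 4 z - (1 - a*z)^4 * E6 z =
  (c 0%nat - 1) + z*((c 1%nat - e1 a) + z*((c 2%nat - e2 a) + z*((c 3%nat - e3 a) + z*((c 4%nat - e4 a)
   + z*(-(Qa a)/120 + z*(- Rr a z)))))).
Proof. rewrite poly_eval4. unfold E6, Qa, e1, e2, e3, e4, Rr, e6, e7, e8, e9. field. Qed.

Lemma pow_le_1 x n : 0 <= x <= 1 -> x ^ n <= 1.
Proof. intros H. rewrite <- (pow1 n). apply pow_incr. lra. Qed.

Lemma peel0 (d : R) (g : R -> R) (m : nat) (M eta B : R) : 0 < eta ->
  (forall z, 0 < Rabs z < eta -> Rabs (g z) <= B) ->
  (forall z, 0 < Rabs z < eta -> Rabs (d + z * g z) <= M * Rabs z ^ (S m)) ->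
  d = 0.
Proof.
  intros He HB HM.
  destruct (Req_dec d 0) as [h|h]; auto. exfalso.
  set (K := Rabs B + Rabs M + 1).
  assert (HK : 0 < K) by (unfold K; pose proof (Rabs_pos B); pose proof (Rabs_pos M); lra).
  assert (Hd : 0 < Rabs d) by (apply Rabs_pos_lt; auto).
  set (z := Rmin (eta/2) (Rmin (1/2) (Rabs d / (2*K)))).
  assert (Hz0 : 0 < z).
  { unfold z. apply Rmin_pos; [lra|]. apply Rmin_pos; [lra|].
    apply Rdiv_lt_0_compat; lra. }
  assert (Hz1 : z <= eta/2) by apply Rmin_l.
  assert (Hz2 : z <= 1/2) by (eapply Rle_trans; [apply Rmin_r | apply Rmin_l]).
  assert (Hz3 : z <= Rabs d / (2*K)) by (eapply Rle_trans; [apply Rmin_r | apply Rmin_r]).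
  assert (Haz : Rabs z = z) by (apply Rabs_right; lra).
  assert (Hr : 0 < Rabs z < eta) by lra.
  specialize (HB z Hr). specialize (HM z Hr). rewrite Haz in HM.
  assert (Hpow : z ^ (S m) <= z).
  { assert (z ^ m <= 1) by (apply pow_le_1; split; lra). simpl. nra. }
  assert (HMp : M * z ^ S m <= Rabs M * z).
  { eapply Rle_trans; [apply Rle_abs|]. rewrite Rabs_mult, (Rabs_right (z ^ S m)).
    - apply Rmult_le_compat_l; [apply Rabs_pos | auto].
    - left. apply pow_lt. lra. }
  assert (Hgz : Rabs (z * g z) <= z * Rabs B).
  { rewrite Rabs_mult, Haz. apply Rmult_le_compat_l; [lra|]. eapply Rle_trans; [apply HB|apply Rle_abs]. }
  assert (Rabs d <= Rabs (d + z * g z) + Rabs (z * g z)).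
  { replace d with ((d + z * g z) + - (z * g z)) at 1 by ring.
    eapply Rle_trans; [apply Rabs_triang|]. rewrite Rabs_Ropp. lra. }
  assert (z * K <= Rabs d / 2).
  { apply (Rmult_le_compat_r K) in Hz3; [|lra].
    replace (Rabs d / (2 * K) * K) with (Rabs d / 2) in Hz3 by (field; lra). lra. }
  unfold K in *. pose proof (Rabs_pos B). nra.
Qed.

Lemma peel (d : R) (g : R -> R) (m : nat) (M eta B : R) : 0 < eta ->
  (forall z, 0 < Rabs z < eta -> Rabs (g z) <= B) ->
  (forall z, 0 < Rabs z < eta -> Rabs (d + z * g z) <= M * Rabs z ^ (S m)) ->
  d = 0 /\ (forall z, 0 < Rabs z < eta -> Rabs (g z) <= M * Rabs z ^ m).
Proof.
  intros He HB HM. pose proof (peel0 d g m M eta B He HB HM) as Hd0. split; auto.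
  intros z Hz.
  specialize (HM z Hz). rewrite Hd0, Rplus_0_l, Rabs_mult in HM.
  simpl in HM. rewrite (Rmult_comm (Rabs z)), <- Rmult_assoc in HM.
  apply Rmult_le_reg_r with (Rabs z); [lra|]. replace (M * Rabs z ^ m * Rabs z) with (M * Rabs z * Rabs z ^ m) by ring. exact HM.
Qed.

Lemma bnd_step d g z B : Rabs z <= 1 -> Rabs g <= B -> Rabs (d + z * g) <= Rabs d + B.
Proof.
  intros Hz Hg. eapply Rle_trans; [apply Rabs_triang|]. rewrite Rabs_mult.
  apply Rplus_le_compat_l. pose proof (Rabs_pos g). nra.
Qed.

Lemma Rr_bnd a z : Rabs z <= 1 -> Rabs (Rr a z) <= Rabs (e6 a) + (Rabs (e7 a) + (Rabs (e8 a) + Rabs (e9 a))).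
Proof.
  intros Hz. unfold Rr. apply bnd_step; auto. apply bnd_step; auto.
  apply bnd_step; auto. lra.
Qed.

Lemma small_w a z : Rabs z < 1 / (2 * (Rabs a + 1)) -> 1/2 < 1 - a*z < 3/2.
Proof.
  intros Hz. assert (Ha : 0 <= Rabs a) by apply Rabs_pos.
  assert (Rabs (a*z) < 1/2).
  { rewrite Rabs_mult. apply Rle_lt_trans with (Rabs a * (1 / (2 * (Rabs a + 1)))).
    - apply Rmult_le_compat_l; [auto|]. lra.
    - apply Rmult_lt_reg_r with (2 * (Rabs a + 1)); [lra|].
      field_simplify; lra. }
  unfold Rabs in H. destruct (Rcase_abs (a*z)); lra.
Qed.

Theorem pihat_coeffs c a : in_Pihat 4 5 c a ->
  c 0%nat = 1 /\ c 1%nat = e1 a /\ c 2%nat = e2 a /\ c 3%nat = e3 a /\ c 4%nat = e4 a /\ Qa a = 0.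
Proof.
  intros [C [eta [Heta H]]].
  set (et := Rmin eta (Rmin 1 (1 / (2 * (Rabs a + 1))))).
  assert (Hpa : 0 < 1 / (2 * (Rabs a + 1))) by (pose proof (Rabs_pos a); apply Rdiv_lt_0_compat; lra).
  assert (Het : 0 < et) by (unfold et; apply Rmin_pos; [auto | apply Rmin_pos; lra]).
  assert (Het1 : et <= eta) by apply Rmin_l.
  assert (Het2 : et <= 1) by (eapply Rle_trans; [apply Rmin_r | apply Rmin_l]).
  assert (Het3 : et <= 1 / (2 * (Rabs a + 1))) by (eapply Rle_trans; [apply Rmin_r | apply Rmin_r]).
  set (M := 6 * Rabs C + 18).
  assert (HD : forall z, 0 < Rabs z < et ->
     Rabs (poly_eval c 4 z - (1 - a*z)^4 * E6 z) <= M * Rabs z ^ 6).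
  { intros z Hz. pose proof (small_w a z ltac:(lra)) as Hw.
    assert (Hw0 : 1 - a*z <> 0) by lra.
    specialize (H z ltac:(lra) Hw0).
    assert (Hw4 : Rabs ((1 - a*z)^4) <= 6).
    { rewrite Rabs_right by (left; apply pow_lt; lra).
      apply Rle_trans with ((3/2)^4); [apply pow_incr; lra | lra]. }
    replace (poly_eval c 4 z - (1 - a*z)^4 * E6 z) with
      ((1 - a*z)^4 * (poly_eval c 4 z / (1 - a*z)^4 - exp z) + (1 - a*z)^4 * (exp z - E6 z))
      by (field; auto).
    eapply Rle_trans; [apply Rabs_triang|]. rewrite !Rabs_mult.
    pose proof (exp_taylor z ltac:(lra)) as HT.
    assert (Hz6 : 0 <= Rabs z ^ 6) by (apply pow_le; apply Rabs_pos).
    assert (HC : Rabs (poly_eval c 4 z / (1 - a * z) ^ 4 - exp z) <= Rabs C * Rabs z ^ 6).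
    { eapply Rle_trans; [apply H|]. apply Rmult_le_compat_r; [auto | apply Rle_abs]. }
    pose proof (Rabs_pos ((1 - a*z)^4)). pose proof (Rabs_pos C).
    pose proof (Rabs_pos (poly_eval c 4 z / (1 - a * z) ^ 4 - exp z)).
    pose proof (Rabs_pos (exp z - E6 z)).
    unfold M. nra. }
  set (b6 := Rabs (e6 a) + (Rabs (e7 a) + (Rabs (e8 a) + Rabs (e9 a)))).
  set (L5 := fun z => -(Qa a)/120 + z*(- Rr a z)).
  set (L4 := fun z => (c 4%nat - e4 a) + z * L5 z).
  set (L3 := fun z => (c 3%nat - e3 a) + z * L4 z).
  set (L2 := fun z => (c 2%nat - e2 a) + z * L3 z).
  set (L1 := fun z => (c 1%nat - e1 a) + z * L2 z).
  assert (HR : forall z, 0 < Rabs z < et -> Rabs (- Rr a z) <= b6).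
  { intros z Hz. rewrite Rabs_Ropp. apply Rr_bnd. lra. }
  assert (H5 : forall z, 0 < Rabs z < et -> Rabs (L5 z) <= Rabs (-(Qa a)/120) + b6).
  { intros z Hz. apply bnd_step; [lra | auto]. }
  assert (H4 : forall z, 0 < Rabs z < et -> Rabs (L4 z) <= Rabs (c 4%nat - e4 a) + (Rabs (-(Qa a)/120) + b6)).
  { intros z Hz. apply bnd_step; [lra | auto]. }
  assert (H3 : forall z, 0 < Rabs z < et -> Rabs (L3 z) <= Rabs (c 3%nat - e3 a) + (Rabs (c 4%nat - e4 a) + (Rabs (-(Qa a)/120) + b6))).
  { intros z Hz. apply bnd_step; [lra | auto]. }
  assert (H2 : forall z, 0 < Rabs z < et -> Rabs (L2 z) <= Rabs (c 2%nat - e2 a) + (Rabs (c 3%nat - e3 a) + (Rabs (c 4%nat - e4 a) + (Rabs (-(Qa a)/120) + b6)))).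
  { intros z Hz. apply bnd_step; [lra | auto]. }
  assert (H1 : forall z, 0 < Rabs z < et -> Rabs (L1 z) <= Rabs (c 1%nat - e1 a) + (Rabs (c 2%nat - e2 a) + (Rabs (c 3%nat - e3 a) + (Rabs (c 4%nat - e4 a) + (Rabs (-(Qa a)/120) + b6))))).
  { intros z Hz. apply bnd_step; [lra | auto]. }
  assert (G0 : forall z, 0 < Rabs z < et -> Rabs ((c 0%nat - 1) + z * L1 z) <= M * Rabs z ^ 6).
  { intros z Hz. specialize (HD z Hz). rewrite ident_D in HD. exact HD. }
  destruct (peel _ _ 5 _ _ _ Het H1 G0) as [E0 G1].
  destruct (peel _ _ 4 _ _ _ Het H2 G1) as [E1 G2].
  destruct (peel _ _ 3 _ _ _ Het H3 G2) as [E2 G3].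
  destruct (peel _ _ 2 _ _ _ Het H4 G3) as [E3 G4].
  destruct (peel _ _ 1 _ _ _ Het H5 G4) as [E4 G5].
  destruct (peel _ _ 0 _ _ _ Het HR G5) as [E5 _].
  repeat split; lra.
Qed.

Theorem pihat_of_root a : Qa a = 0 -> in_Pihat 4 5 (cc a) a.
Proof.
  intros HQ.
  set (b6 := Rabs (e6 a) + (Rabs (e7 a) + (Rabs (e8 a) + Rabs (e9 a)))).
  set (et := Rmin 1 (1 / (2 * (Rabs a + 1)))).
  assert (Hpa : 0 < 1 / (2 * (Rabs a + 1))) by (pose proof (Rabs_pos a); apply Rdiv_lt_0_compat; lra).
  exists (16 * b6 + 3), et. split; [unfold et; apply Rmin_pos; lra|].
  intros z Hz Hw0.
  assert (Hz1 : Rabs z <= 1) by (left; eapply Rlt_le_trans; [apply Hz | apply Rmin_l]).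
  assert (Hw : 1/2 < 1 - a*z < 3/2) by (apply small_w; eapply Rlt_le_trans; [apply Hz | apply Rmin_r]).
  assert (Hid : poly_eval (cc a) 4 z - (1 - a*z)^4 * E6 z = z^6 * (- Rr a z)).
  { rewrite ident_D. unfold cc. rewrite HQ. field. }
  replace (poly_eval (cc a) 4 z / (1 - a * z) ^ 4 - exp z) with
    ((z^6 * (- Rr a z)) / (1 - a*z)^4 + - (exp z - E6 z)).
  2:{ rewrite <- Hid. field. auto. }
  eapply Rle_trans; [apply Rabs_triang|]. rewrite Rabs_Ropp.
  pose proof (exp_taylor z Hz1) as HT.
  assert (HRb : Rabs (- Rr a z) <= b6) by (rewrite Rabs_Ropp; apply Rr_bnd; auto).
  assert (Hw4 : 1/16 <= (1 - a*z)^4).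
  { replace (1/16) with ((1/2)^4) by field. apply pow_incr. lra. }
  assert (H1 : Rabs (z ^ 6 * - Rr a z / (1 - a * z) ^ 4) <= 16 * b6 * Rabs z ^ 6).
  { unfold Rdiv. rewrite !Rabs_mult, Rabs_inv, RPow_abs.
    rewrite (Rabs_right ((1 - a*z)^4)) by lra.
    assert (0 < / (1 - a*z)^4 <= 16).
    { split. apply Rinv_0_lt_compat; lra.
      replace 16 with (/ (1/16)) by field. apply Rinv_le_contravar; lra. }
    pose proof (Rabs_pos (z ^ 6)). pose proof (Rabs_pos (- Rr a z)).
    set (p := Rabs (z ^ 6)) in *. set (r := Rabs (- Rr a z)) in *. set (i := / (1 - a*z)^4) in *.
    assert (p * r <= p * b6) by (apply Rmult_le_compat_l; lra).
    assert (0 <= p * r) by (apply Rmult_le_pos; lra).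
    assert (p * r * i <= p * b6 * i) by (apply Rmult_le_compat_r; lra).
    assert (p * b6 * i <= p * b6 * 16) by (apply Rmult_le_compat_l; [apply Rmult_le_pos; lra | lra]).
    lra. }
  lra.
Qed.

Definition Hr (a x : R) : R :=
  1 + (1 - 5*a)*x + (1/2 - 5*a + 10*a^2)*x^2 + (1/6 - 5/2*a + 10*a^2 - 10*a^3)*x^3.

Definition l1 : R := (228229333663/2500000000000).
Definition l1q : Q := (Qmake (228229333663) 2500000000000).
Lemma l1q_R : Q2R l1q = l1.
Proof. unfold l1q, l1. cbv [Q2R Qnum Qden]. field. Qed.
Definition u1 : R := (912917334653/10000000000000).
Definition u1q : Q := (Qmake (912917334653) 10000000000000).
Lemma u1q_R : Q2R u1q = u1.
Proof. unfold u1q, u1. cbv [Q2R Qnum Qden]. field. Qed.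
Definition l2 : R := (1744841/10000000).
Definition l2q : Q := (Qmake (1744841) 10000000).
Lemma l2q_R : Q2R l2q = l2.
Proof. unfold l2q, l2. cbv [Q2R Qnum Qden]. field. Qed.
Definition u2 : R := (872421/5000000).
Definition u2q : Q := (Qmake (872421) 5000000).
Lemma u2q_R : Q2R u2q = u2.
Proof. unfold u2q, u2. cbv [Q2R Qnum Qden]. field. Qed.
Definition l3 : R := (60759/156250).
Definition l3q : Q := (Qmake (60759) 156250).
Lemma l3q_R : Q2R l3q = l3.
Proof. unfold l3q, l3. cbv [Q2R Qnum Qden]. field. Qed.
Definition u3 : R := (3888577/10000000).
Definition u3q : Q := (Qmake (3888577) 10000000).
Lemma u3q_R : Q2R u3q = u3.
Proof. unfold u3q, u3. cbv [Q2R Qnum Qden]. field. Qed.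
Definition l4 : R := (420427/312500).
Definition l4q : Q := (Qmake (420427) 312500).
Lemma l4q_R : Q2R l4q = l4.
Proof. unfold l4q, l4. cbv [Q2R Qnum Qden]. field. Qed.
Definition u4 : R := (2690733/2000000).
Definition u4q : Q := (Qmake (2690733) 2000000).
Lemma u4q_R : Q2R u4q = u4.
Proof. unfold u4q, u4. cbv [Q2R Qnum Qden]. field. Qed.
Definition lo0 : R := (20401689/500000).
Definition lo0q : Q := (Qmake (20401689) 500000).
Lemma lo0q_R : Q2R lo0q = lo0.
Proof. unfold lo0q, lo0. cbv [Q2R Qnum Qden]. field. Qed.
Definition lo1 : R := (-204016897/1000000).
Definition lo1q : Q := (Qmake (-204016897) 1000000).
Lemma lo1q_R : Q2R lo1q = lo1.
Proof. unfold lo1q, lo1. cbv [Q2R Qnum Qden]. field. Qed.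
Definition lo2 : R := (389408733/1000000).
Definition lo2q : Q := (Qmake (389408733) 1000000).
Lemma lo2q_R : Q2R lo2q = lo2.
Proof. unfold lo2q, lo2. cbv [Q2R Qnum Qden]. field. Qed.
Definition lo3 : R := (-84233549/250000).
Definition lo3q : Q := (Qmake (-84233549) 250000).
Lemma lo3q_R : Q2R lo3q = lo3.
Proof. unfold lo3q, lo3. cbv [Q2R Qnum Qden]. field. Qed.
Definition lo4 : R := (55869487/500000).
Definition lo4q : Q := (Qmake (55869487) 500000).
Lemma lo4q_R : Q2R lo4q = lo4.
Proof. unfold lo4q, lo4. cbv [Q2R Qnum Qden]. field. Qed.
Definition Wb : R := (134173228197644406429/100000000000000000000).
Definition Wbq : Q := (Qmake (134173228197644406429) 100000000000000000000).
Lemma Wbq_R : Q2R Wbq = Wb.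
Proof. unfold Wbq, Wb. cbv [Q2R Qnum Qden]. field. Qed.
Definition xL : R := (-37432993/10000000).
Definition xLq : Q := (Qmake (-37432993) 10000000).
Lemma xLq_R : Q2R xLq = xL.
Proof. unfold xLq, xL. cbv [Q2R Qnum Qden]. field. Qed.
Definition xR : R := (-1169781/312500).
Definition xRq : Q := (Qmake (-1169781) 312500).
Lemma xRq_R : Q2R xRq = xR.
Proof. unfold xRq, xR. cbv [Q2R Qnum Qden]. field. Qed.
Definition w1 : R := (1).
Definition w1q : Q := (Qmake (1) 1).
Lemma w1q_R : Q2R w1q = w1.
Proof. unfold w1q, w1. cbv [Q2R Qnum Qden]. field. Qed.

Definition TTlo (K w : R) : R := lo1 * w^3 + lo2 * K * w^2 + lo3 * (K*(K+1)/2) * w + lo4 * (K*(K+1)*(K+2)/6).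
Definition Acoef0 (w : R) : R := (55869487/25000) + (-84233549/25000)*w + (389408733/250000)*w^2 + (-204016897/1000000)*w^3.
Definition Acoef1 (w : R) : R := (2067171019/1500000) + (-758101941/500000)*w + (389408733/1000000)*w^2.
Definition Acoef2 (w : R) : R := (55869487/200000) + (-84233549/500000)*w.
Definition Acoef3 (w : R) : R := (55869487/3000000).
Definition dq12 (x : R) : R := (-20736)*x^0 + (89856)*x^1 + (-105408)*x^2 + (-36288)*x^3 + (66240)*x^4 + (16704)*x^5 + (-14112)*x^6 + (-6912)*x^7 + (-288)*x^8 + (480)*x^9 + (132)*x^10 + (12)*x^11.
Definition p_B0lo : list Q := [(Qmake (132794933) 1500000); (Qmake (-1220) 1); (Qmake (2880) 1); (Qmake (-1520) 1)].
Lemma c_B0lo : check_pos p_B0lo l1q u1q 0 = true.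
Proof. vm_compute. reflexivity. Qed.
Lemma n_B0lo (a : R) : l1 <= a <= u1 -> 0 < B0 a - lo0.
Proof.
  intros H. rewrite <- ?l1q_R, <- ?u1q_R in H. pose proof (check_pos_ok _ _ _ _ c_B0lo a H) as K.
  replace (B0 a - lo0) with (hev (RP p_B0lo) a); [exact K|].
  unfold p_B0lo. cbv [hev map Q2R Qnum Qden]. unfold B0, lo0. field.
Qed.
Definition p_B1lo : list Q := [(Qmake (-1327949309) 3000000); (Qmake (6100) 1); (Qmake (-14400) 1); (Qmake (7600) 1)].
Lemma c_B1lo : check_pos p_B1lo l1q u1q 0 = true.
Proof. vm_compute. reflexivity. Qed.
Lemma n_B1lo (a : R) : l1 <= a <= u1 -> 0 < B1 a - lo1.
Proof.
  intros H. rewrite <- ?l1q_R, <- ?u1q_R in H. pose proof (check_pos_ok _ _ _ _ c_B1lo a H) as K.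
  replace (B1 a - lo1) with (hev (RP p_B1lo) a); [exact K|].
  unfold p_B1lo. cbv [hev map Q2R Qnum Qden]. unfold B1, lo1. field.
Qed.
Definition p_B2lo : list Q := [(Qmake (840591267) 1000000); (Qmake (-11580) 1); (Qmake (27300) 1); (Qmake (-14400) 1)].
Lemma c_B2lo : check_pos p_B2lo l1q u1q 0 = true.
Proof. vm_compute. reflexivity. Qed.
Lemma n_B2lo (a : R) : l1 <= a <= u1 -> 0 < B2 a - lo2.
Proof.
  intros H. rewrite <- ?l1q_R, <- ?u1q_R in H. pose proof (check_pos_ok _ _ _ _ c_B2lo a H) as K.
  replace (B2 a - lo2) with (hev (RP p_B2lo) a); [exact K|].
  unfold p_B2lo. cbv [hev map Q2R Qnum Qden]. unfold B2, lo2. field.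
Qed.
Definition p_B3lo : list Q := [(Qmake (-537299353) 750000); (Qmake (9860) 1); (Qmake (-23160) 1); (Qmake (12200) 1)].
Lemma c_B3lo : check_pos p_B3lo l1q u1q 0 = true.
Proof. vm_compute. reflexivity. Qed.
Lemma n_B3lo (a : R) : l1 <= a <= u1 -> 0 < B3 a - lo3.
Proof.
  intros H. rewrite <- ?l1q_R, <- ?u1q_R in H. pose proof (check_pos_ok _ _ _ _ c_B3lo a H) as K.
  replace (B3 a - lo3) with (hev (RP p_B3lo) a); [exact K|].
  unfold p_B3lo. cbv [hev map Q2R Qnum Qden]. unfold B3, lo3. field.
Qed.
Definition p_B4lo : list Q := [(Qmake (344891539) 1500000); (Qmake (-3160) 1); (Qmake (7380) 1); (Qmake (-3880) 1)].
Lemma c_B4lo : check_pos p_B4lo l1q u1q 0 = true.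
Proof. vm_compute. reflexivity. Qed.
Lemma n_B4lo (a : R) : l1 <= a <= u1 -> 0 < B4 a - lo4.
Proof.
  intros H. rewrite <- ?l1q_R, <- ?u1q_R in H. pose proof (check_pos_ok _ _ _ _ c_B4lo a H) as K.
  replace (B4 a - lo4) with (hev (RP p_B4lo) a); [exact K|].
  unfold p_B4lo. cbv [hev map Q2R Qnum Qden]. unfold B4, lo4. field.
Qed.
Definition p_h3 : list Q := [(Qmake (1) 6); (Qmake (-5) 2); (Qmake (10) 1); (Qmake (-10) 1)].
Lemma c_h3 : check_pos p_h3 l1q u1q 0 = true.
Proof. vm_compute. reflexivity. Qed.
Lemma n_h3 (a : R) : l1 <= a <= u1 -> 0 < 1/6 - 5/2*a + 10*a^2 - 10*a^3.
Proof.
  intros H. rewrite <- ?l1q_R, <- ?u1q_R in H. pose proof (check_pos_ok _ _ _ _ c_h3 a H) as K.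
  replace (1/6 - 5/2*a + 10*a^2 - 10*a^3) with (hev (RP p_h3) a); [exact K|].
  unfold p_h3. cbv [hev map Q2R Qnum Qden].  field.
Qed.
Definition p_disc : list Q := [(Qmake (1) 4); (Qmake (-5) 1); (Qmake (65) 2); (Qmake (-80) 1); (Qmake (50) 1)].
Lemma c_disc : check_pos p_disc l1q u1q 0 = true.
Proof. vm_compute. reflexivity. Qed.
Lemma n_disc (a : R) : l1 <= a <= u1 -> 0 < 3*(1-5*a)*(1/6 - 5/2*a + 10*a^2 - 10*a^3) - (1/2 - 5*a + 10*a^2)^2.
Proof.
  intros H. rewrite <- ?l1q_R, <- ?u1q_R in H. pose proof (check_pos_ok _ _ _ _ c_disc a H) as K.
  replace (3*(1-5*a)*(1/6 - 5/2*a + 10*a^2 - 10*a^3) - (1/2 - 5*a + 10*a^2)^2) with (hev (RP p_disc) a); [exact K|].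
  unfold p_disc. cbv [hev map Q2R Qnum Qden].  field.
Qed.
Definition p_HL : list Q := [(Qmake (26875120887781763650657) 6000000000000000000000); (Qmake (-31914213337162253650657) 400000000000000000000); (Qmake (38439904386542743650657) 100000000000000000000); (Qmake (-52452194035923233650657) 100000000000000000000)].
Lemma c_HL : check_pos p_HL l1q u1q 0 = true.
Proof. vm_compute. reflexivity. Qed.
Lemma n_HL (a : R) : l1 <= a <= u1 -> 0 < - Hr a xL.
Proof.
  intros H. rewrite <- ?l1q_R, <- ?u1q_R in H. pose proof (check_pos_ok _ _ _ _ c_HL a H) as K.
  replace (- Hr a xL) with (hev (RP p_HL) a); [exact K|].
  unfold p_HL. cbv [hev map Q2R Qnum Qden]. unfold Hr, xL. field.
Qed.
Definition p_HR : list Q := [(Qmake (-273387841085556347) 61035156250000000); (Qmake (973944410119481541) 12207031250000000); (Qmake (-1173092679794794041) 3051757812500000); (Qmake (1600713801032606541) 3051757812500000)].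
Lemma c_HR : check_pos p_HR l1q u1q 0 = true.
Proof. vm_compute. reflexivity. Qed.
Lemma n_HR (a : R) : l1 <= a <= u1 -> 0 < Hr a xR.
Proof.
  intros H. rewrite <- ?l1q_R, <- ?u1q_R in H. pose proof (check_pos_ok _ _ _ _ c_HR a H) as K.
  replace (Hr a xR) with (hev (RP p_HR) a); [exact K|].
  unfold p_HR. cbv [hev map Q2R Qnum Qden]. unfold Hr, xR. field.
Qed.
Definition p_Ql1 : list Q := [(Qmake (1) 1); (Qmake (-20) 1); (Qmake (120) 1); (Qmake (-240) 1); (Qmake (120) 1)].
Lemma c_Ql1 : check_pos p_Ql1 l1q l1q 0 = true.
Proof. vm_compute. reflexivity. Qed.
Lemma n_Ql1 (a : R) : l1 <= a <= l1 -> 0 < Qa a.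
Proof.
  intros H. rewrite <- ?l1q_R, <- ?l1q_R in H. pose proof (check_pos_ok _ _ _ _ c_Ql1 a H) as K.
  replace (Qa a) with (hev (RP p_Ql1) a); [exact K|].
  unfold p_Ql1. cbv [hev map Q2R Qnum Qden]. unfold Qa. field.
Qed.
Definition p_Qu1 : list Q := [(Qmake (-1) 1); (Qmake (20) 1); (Qmake (-120) 1); (Qmake (240) 1); (Qmake (-120) 1)].
Lemma c_Qu1 : check_pos p_Qu1 u1q u1q 0 = true.
Proof. vm_compute. reflexivity. Qed.
Lemma n_Qu1 (a : R) : u1 <= a <= u1 -> 0 < - Qa a.
Proof.
  intros H. rewrite <- ?u1q_R, <- ?u1q_R in H. pose proof (check_pos_ok _ _ _ _ c_Qu1 a H) as K.
  replace (- Qa a) with (hev (RP p_Qu1) a); [exact K|].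
  unfold p_Qu1. cbv [hev map Q2R Qnum Qden]. unfold Qa. field.
Qed.
Definition p_V0 : list Q := [(Qmake (55869487) 500000); (Qmake (-84233549) 250000); (Qmake (389408733) 1000000); (Qmake (-204016897) 1000000); (Qmake (20401689) 500000)].
Lemma c_V0 : check_pos p_V0 w1q Wbq 2 = true.
Proof. vm_compute. reflexivity. Qed.
Lemma n_V0 (w : R) : w1 <= w <= Wb -> 0 < lo0*w^4 + lo1*w^3 + lo2*w^2 + lo3*w + lo4.
Proof.
  intros H. rewrite <- ?w1q_R, <- ?Wbq_R in H. pose proof (check_pos_ok _ _ _ _ c_V0 w H) as K.
  replace (lo0*w^4 + lo1*w^3 + lo2*w^2 + lo3*w + lo4) with (hev (RP p_V0) w); [exact K|].
  unfold p_V0. cbv [hev map Q2R Qnum Qden]. unfold lo0, lo1, lo2, lo3, lo4. field.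
Qed.
Definition p_T3 : list Q := [(Qmake (55869487) 50000); (Qmake (-252700647) 125000); (Qmake (1168226199) 1000000); (Qmake (-204016897) 1000000)].
Lemma c_T3 : check_pos p_T3 w1q Wbq 1 = true.
Proof. vm_compute. reflexivity. Qed.
Lemma n_T3 (w : R) : w1 <= w <= Wb -> 0 < TTlo 3 w.
Proof.
  intros H. rewrite <- ?w1q_R, <- ?Wbq_R in H. pose proof (check_pos_ok _ _ _ _ c_T3 w H) as K.
  replace (TTlo 3 w) with (hev (RP p_T3) w); [exact K|].
  unfold p_T3. cbv [hev map Q2R Qnum Qden]. unfold TTlo, lo1, lo2, lo3, lo4. field.
Qed.
Definition p_A0 : list Q := [(Qmake (55869487) 25000); (Qmake (-84233549) 25000); (Qmake (389408733) 250000); (Qmake (-204016897) 1000000)].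
Lemma c_A0 : check_pos p_A0 w1q Wbq 1 = true.
Proof. vm_compute. reflexivity. Qed.
Lemma n_A0 (w : R) : w1 <= w <= Wb -> 0 < Acoef0 w.
Proof.
  intros H. rewrite <- ?w1q_R, <- ?Wbq_R in H. pose proof (check_pos_ok _ _ _ _ c_A0 w H) as K.
  replace (Acoef0 w) with (hev (RP p_A0) w); [exact K|].
  unfold p_A0. cbv [hev map Q2R Qnum Qden]. unfold Acoef0. field.
Qed.
Definition p_A1 : list Q := [(Qmake (2067171019) 1500000); (Qmake (-758101941) 500000); (Qmake (389408733) 1000000)].
Lemma c_A1 : check_pos p_A1 w1q Wbq 1 = true.
Proof. vm_compute. reflexivity. Qed.
Lemma n_A1 (w : R) : w1 <= w <= Wb -> 0 < Acoef1 w.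
Proof.
  intros H. rewrite <- ?w1q_R, <- ?Wbq_R in H. pose proof (check_pos_ok _ _ _ _ c_A1 w H) as K.
  replace (Acoef1 w) with (hev (RP p_A1) w); [exact K|].
  unfold p_A1. cbv [hev map Q2R Qnum Qden]. unfold Acoef1. field.
Qed.
Definition p_A2 : list Q := [(Qmake (55869487) 200000); (Qmake (-84233549) 500000)].
Lemma c_A2 : check_pos p_A2 w1q Wbq 0 = true.
Proof. vm_compute. reflexivity. Qed.
Lemma n_A2 (w : R) : w1 <= w <= Wb -> 0 < Acoef2 w.
Proof.
  intros H. rewrite <- ?w1q_R, <- ?Wbq_R in H. pose proof (check_pos_ok _ _ _ _ c_A2 w H) as K.
  replace (Acoef2 w) with (hev (RP p_A2) w); [exact K|].
  unfold p_A2. cbv [hev map Q2R Qnum Qden]. unfold Acoef2. field.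
Qed.
Definition p_A3 : list Q := [(Qmake (55869487) 3000000)].
Lemma c_A3 : check_pos p_A3 w1q Wbq 0 = true.
Proof. vm_compute. reflexivity. Qed.
Lemma n_A3 (w : R) : w1 <= w <= Wb -> 0 < Acoef3 w.
Proof.
  intros H. rewrite <- ?w1q_R, <- ?Wbq_R in H. pose proof (check_pos_ok _ _ _ _ c_A3 w H) as K.
  replace (Acoef3 w) with (hev (RP p_A3) w); [exact K|].
  unfold p_A3. cbv [hev map Q2R Qnum Qden]. unfold Acoef3. field.
Qed.
Definition p_dq : list Q := [(Qmake (20736) 1); (Qmake (-89856) 1); (Qmake (105408) 1); (Qmake (36288) 1); (Qmake (-66240) 1); (Qmake (-16704) 1); (Qmake (14112) 1); (Qmake (6912) 1); (Qmake (288) 1); (Qmake (-480) 1); (Qmake (-132) 1); (Qmake (-12) 1)].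
Lemma c_dq : check_pos p_dq xLq xRq 0 = true.
Proof. vm_compute. reflexivity. Qed.
Lemma n_dq (x : R) : xL <= x <= xR -> 0 < - dq12 x.
Proof.
  intros H. rewrite <- ?xLq_R, <- ?xRq_R in H. pose proof (check_pos_ok _ _ _ _ c_dq x H) as K.
  replace (- dq12 x) with (hev (RP p_dq) x); [exact K|].
  unfold p_dq. cbv [hev map Q2R Qnum Qden]. unfold dq12. field.
Qed.
Definition p_r2 : list Q := [(Qmake (-86660) 3); (Qmake (262600) 1); (Qmake (-608400) 1); (Qmake (319000) 1)].
Lemma c_r2 : check_pos p_r2 l2q u2q 0 = true.
Proof. vm_compute. reflexivity. Qed.
Lemma n_r2 (a : R) : l2 <= a <= u2 -> 0 < - TT a 10 1.
Proof.
  intros H. rewrite <- ?l2q_R, <- ?u2q_R in H. pose proof (check_pos_ok _ _ _ _ c_r2 a H) as K.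
  replace (- TT a 10 1) with (hev (RP p_r2) a); [exact K|].
  unfold p_r2. cbv [hev map Q2R Qnum Qden]. unfold TT, B1, B2, B3, B4. field.
Qed.
Definition p_r4 : list Q := [(Qmake (-86660) 3); (Qmake (262600) 1); (Qmake (-608400) 1); (Qmake (319000) 1)].
Lemma c_r4 : check_pos p_r4 l4q u4q 0 = true.
Proof. vm_compute. reflexivity. Qed.
Lemma n_r4 (a : R) : l4 <= a <= u4 -> 0 < - TT a 10 1.
Proof.
  intros H. rewrite <- ?l4q_R, <- ?u4q_R in H. pose proof (check_pos_ok _ _ _ _ c_r4 a H) as K.
  replace (- TT a 10 1) with (hev (RP p_r4) a); [exact K|].
  unfold p_r4. cbv [hev map Q2R Qnum Qden]. unfold TT, B1, B2, B3, B4. field.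
Qed.
Definition p_r3 : list Q := [(Qmake (-86660) 3); (Qmake (893620) 3); (Qmake (-947760) 1); (Qmake (3564440) 3); (Qmake (-641700) 1); (Qmake (135600) 1); (Qmake (-7600) 1)].
Lemma c_r3 : check_pos p_r3 l3q u3q 0 = true.
Proof. vm_compute. reflexivity. Qed.
Lemma n_r3 (a : R) : l3 <= a <= u3 -> 0 < - TT a 10 (1+a).
Proof.
  intros H. rewrite <- ?l3q_R, <- ?u3q_R in H. pose proof (check_pos_ok _ _ _ _ c_r3 a H) as K.
  replace (- TT a 10 (1+a)) with (hev (RP p_r3) a); [exact K|].
  unfold p_r3. cbv [hev map Q2R Qnum Qden]. unfold TT, B1, B2, B3, B4. field.
Qed.
Definition p_Q : list Q := [(Qmake (1) 1); (Qmake (-20) 1); (Qmake (120) 1); (Qmake (-240) 1); (Qmake (120) 1)].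
Definition p_nQ : list Q := [(Qmake (-1) 1); (Qmake (20) 1); (Qmake (-120) 1); (Qmake (240) 1); (Qmake (-120) 1)].
Definition p_q12 : list Q := [(Qmake (3456) 1); (Qmake (-20736) 1); (Qmake (44928) 1); (Qmake (-35136) 1); (Qmake (-9072) 1); (Qmake (13248) 1); (Qmake (2784) 1); (Qmake (-2016) 1); (Qmake (-864) 1); (Qmake (-32) 1); (Qmake (48) 1); (Qmake (12) 1); (Qmake (1) 1)].
Lemma hev_Q a : hev (RP p_Q) a = Qa a.
Proof. unfold p_Q. cbv [hev map Q2R Qnum Qden]. unfold Qa. field. Qed.
Lemma hev_nQ a : hev (RP p_nQ) a = - Qa a.
Proof. unfold p_nQ. cbv [hev map Q2R Qnum Qden]. unfold Qa. field. Qed.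
Lemma hev_q12 x : hev (RP p_q12) x = q12 x.
Proof. unfold p_q12. cbv [hev map Q2R Qnum Qden]. unfold q12. field. Qed.
Lemma c_Qle : check_ge (negP p_Q) (- l1q) = true. Proof. vm_compute. reflexivity. Qed.
Lemma c_Qge : check_ge p_Q u4q = true. Proof. vm_compute. reflexivity. Qed.
Lemma c_q12le : check_ge (negP p_q12) (- xLq) = true. Proof. vm_compute. reflexivity. Qed.
Lemma c_g1 : chk_list p_nQ u1q [(Qmake (2657758334653) 20000000000000); (Qmake (6147440334653) 40000000000000); (Qmake (13126804334653) 80000000000000); (Qmake (27085532334653) 160000000000000); (Qmake (55002988334653) 320000000000000); (Qmake (110837900334653) 640000000000000); (Qmake (222507724334653) 1280000000000000); (Qmake (1744841) 10000000)] l2q = true. Proof. vm_compute. reflexivity. Qed.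
Lemma c_g2 : chk_list p_Q u2q [(Qmake (2816709) 10000000); (Qmake (1341057) 4000000); (Qmake (14482437) 40000000); (Qmake (30036741) 80000000); (Qmake (61145349) 160000000); (Qmake (60759) 156250)] l3q = true. Proof. vm_compute. reflexivity. Qed.
Lemma c_g3 : chk_list p_nQ u3q [(Qmake (420427) 312500)] l4q = true. Proof. vm_compute. reflexivity. Qed.

Lemma Q_roots a : Qa a = 0 ->
  (l1 <= a <= u1) \/ (l2 <= a <= u2) \/ (l3 <= a <= u3) \/ (l4 <= a <= u4).
Proof.
  intros HQ.
  assert (Hcl : forall p l u pts, chk_list p l pts u = true -> forall x, Q2R l <= x <= Q2R u -> 0 < hev (RP p) x)
    by (intros; eapply chk_list_ok; eauto).
  destruct (Rle_dec a l1).
  { exfalso. pose proof (check_le_ok _ _ c_Qle a ltac:(rewrite l1q_R; auto)) as K.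
    rewrite hev_Q in K. lra. }
  destruct (Rle_dec a u1); [left; lra|].
  destruct (Rle_dec a l2).
  { exfalso. pose proof (Hcl _ _ _ _ c_g1 a ltac:(rewrite u1q_R, l2q_R; lra)) as K.
    rewrite hev_nQ in K. lra. }
  destruct (Rle_dec a u2); [right; left; lra|].
  destruct (Rle_dec a l3).
  { exfalso. pose proof (Hcl _ _ _ _ c_g2 a ltac:(rewrite u2q_R, l3q_R; lra)) as K.
    rewrite hev_Q in K. lra. }
  destruct (Rle_dec a u3); [right; right; left; lra|].
  destruct (Rle_dec a l4).
  { exfalso. pose proof (Hcl _ _ _ _ c_g3 a ltac:(rewrite u3q_R, l4q_R; lra)) as K.
    rewrite hev_nQ in K. lra. }
  destruct (Rle_dec a u4); [right; right; right; lra|].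
  exfalso. pose proof (check_ge_ok _ _ c_Qge a ltac:(rewrite u4q_R; lra)) as K.
  rewrite hev_Q in K. lra.
Qed.

Lemma q12_pos_left x : x <= xL -> 0 < q12 x.
Proof.
  intros H. pose proof (check_le_ok _ _ c_q12le x ltac:(rewrite xLq_R; auto)) as K.
  rewrite hev_q12 in K. exact K.
Qed.

Definition q1 (a y : R) : R := (1)*y + (1/2)*y^2 + (1/6)*y^3 + (1/24)*y^4 + (6)*a*y^2 + (4/3)*a*y^3 + (1/6)*a*y^4 + (38/3)*a^2*y^3 + (4/3)*a^2*y^4 + (38/3)*a^3*y^4.
Definition q2 (a y : R) : R := (-1) + (-1)*y + (-1/2)*y^2 + (-1/6)*y^3 + (-15)*a*y + (-5)*a*y^2 + (-5/6)*a*y^3 + (-50)*a^2*y^2 + (-20/3)*a^2*y^3 + (-190/3)*a^3*y^3.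
Definition Tres (a x : R) : R := (1) + (-7)*x + (39/2)*x^2 + (-79/3)*x^3 + (29/2)*x^4 + (11/12)*x^5 + (-289/72)*x^6 + (-5/36)*x^7 + (71/144)*x^8 + (7/72)*x^9 + (5)*a*x + (-35)*a*x^2 + (195/2)*a*x^3 + (-120)*a*x^4 + (35)*a*x^5 + (455/12)*a*x^6 + (-265/72)*a*x^7 + (-55/9)*a*x^8 + (-155/144)*a*x^9 + (15)*a^2*x^2 + (-105)*a^2*x^3 + (445/2)*a^2*x^4 + (-275/2)*a^2*x^5 + (-355/4)*a^2*x^6 + (175/12)*a^2*x^7 + (385/24)*a^2*x^8 + (65/24)*a^2*x^9 + (35)*a^3*x^3 + (-105)*a^3*x^4 + (165/2)*a^3*x^5 + (140/3)*a^3*x^6 + (-35/4)*a^3*x^7 + (-35/4)*a^3*x^8 + (-35/24)*a^3*x^9.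
Definition Ares (a x : R) : R := (-5/8)*x^4 + (5/3)*x^5 + (-25/24)*x^6 + (-25/36)*x^7 + (-5/4)*x^8 + (-5/36)*x^9 + (265/864)*x^10 + (55/432)*x^11 + (55/3456)*x^12 + (5/3)*a*x^5 + (-35/12)*a*x^6 + (-35/12)*a*x^7 + (305/36)*a*x^8 + (25/9)*a*x^9 + (-175/144)*a*x^10 + (-35/48)*a*x^11 + (-5/48)*a*x^12 + (-35/12)*a^2*x^6 + (35/4)*a^2*x^7 + (-55/8)*a^2*x^8 + (-35/9)*a^2*x^9 + (35/48)*a^2*x^10 + (35/48)*a^2*x^11 + (35/288)*a^2*x^12.

Lemma id1 a y : poly_eval (cc a) 4 y =
  B0 a * (1-a*y)^4 + B1 a * (1-a*y)^3 + B2 a * (1-a*y)^2 + B3 a * (1-a*y) + B4 a + Qa a * q1 a y.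
Proof. rewrite poly_eval4. unfold cc, e1, e2, e3, e4, B0, B1, B2, B3, B4, Qa, q1. field. Qed.

Lemma id2 a y : a * (B1 a * (1-a*y)^3 + 2 * B2 a * (1-a*y)^2 + 3 * B3 a * (1-a*y) + 4 * B4 a)
  = Hr a y + Qa a * q2 a y.
Proof. unfold Hr, B1, B2, B3, B4, Qa, q2. field. Qed.

Lemma id3 a x : Tres a x * Hr a x = q12 x / 3456 + Qa a * Ares a x.
Proof. unfold Tres, Hr, q12, Qa, Ares. field. Qed.

Lemma Fk0_eq a y : Qa a = 0 -> 1 - a*y <> 0 ->
  Fk a 0 y = poly_eval (cc a) 4 y / (1 - a*y)^4.
Proof.
  intros HQ Hw. rewrite id1, HQ. unfold Fk. simpl fact. simpl INR. field. auto.
Qed.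

Lemma Fk1_eq a y : Qa a = 0 -> 1 - a*y <> 0 ->
  Fk a 1 y = Hr a y / (1 - a*y)^5.
Proof.
  intros HQ Hw. replace (Hr a y) with (Hr a y + Qa a * q2 a y) by (rewrite HQ; ring).
  rewrite <- id2. unfold Fk. simpl fact. simpl INR. field. auto.
Qed.

Lemma l1_pos : 0 < l1. Proof. unfold l1; lra. Qed.
Lemma Wb_eq : Wb = 1 - u1 * xL. Proof. unfold Wb, u1, xL. field. Qed.

Lemma dq12_ok x : derivable_pt_lim q12 x (dq12 x).
Proof. apply is_derive_Reals. unfold q12, dq12. auto_derive; auto. ring. Qed.

Lemma q12_decr x y : xL <= x -> x < y -> y <= xR -> q12 y < q12 x.
Proof.
  intros H1 H2 H3.
  destruct (MVT_cor2 q12 dq12 x y H2 (fun c _ => dq12_ok c)) as [c [Hc1 Hc2]].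
  pose proof (n_dq c ltac:(lra)). nra.
Qed.

Lemma Hr_incr a x y : l1 <= a <= u1 -> x < y -> Hr a x < Hr a y.
Proof.
  intros Ha Hxy. pose proof (n_h3 a Ha) as H3. pose proof (n_disc a Ha) as HD.
  set (h1 := 1 - 5*a) in *. set (h2 := 1/2 - 5*a + 10*a^2) in *.
  set (h3 := 1/6 - 5/2*a + 10*a^2 - 10*a^3) in *.
  assert (E : Hr a y - Hr a x = (y - x) * (h1 + h2*(x+y) + h3*(x^2+x*y+y^2))).
  { unfold Hr, h1, h2, h3. field. }
  set (s := x + y).
  assert (G1 : h1 + h2*(x+y) + h3*(x^2+x*y+y^2) >= h1 + h2*s + 3/4*h3*s^2).
  { assert (0 <= h3 * ((x-y)^2/4)) by (apply Rmult_le_pos; [lra | unfold Rdiv; apply Rmult_le_pos; [apply pow2_ge_0 | lra]]).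
    replace (h3*(x^2+x*y+y^2)) with (3/4*h3*s^2 + h3*((x-y)^2/4)) by (unfold s; field). unfold s; lra. }
  assert (G2 : 3*h3*(h1 + h2*s + 3/4*h3*s^2) = (3/2*h3*s + h2)^2 + (3*h1*h3 - h2^2)) by field.
  assert (G3 : 0 < h1 + h2*s + 3/4*h3*s^2).
  { assert (0 < 3*h3*(h1 + h2*s + 3/4*h3*s^2)).
    { rewrite G2. pose proof (pow2_ge_0 (3/2*h3*s + h2)). lra. }
    destruct (Rle_dec (h1 + h2*s + 3/4*h3*s^2) 0) as [h|h]; [|lra].
    assert (3*h3*(h1 + h2*s + 3/4*h3*s^2) <= 0).
    { rewrite <- (Rmult_0_r (3*h3)). apply Rmult_le_compat_l; lra. }
    lra. }
  assert (0 < (y - x) * (h1 + h2*(x+y) + h3*(x^2+x*y+y^2))) by (apply Rmult_lt_0_compat; lra).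
  lra.
Qed.

Lemma TT_ge_lo a K w : 0 <= K -> 0 <= w ->
  lo1 <= B1 a -> lo2 <= B2 a -> lo3 <= B3 a -> lo4 <= B4 a -> TTlo K w <= TT a K w.
Proof.
  intros HK Hw H1 H2 H3 H4. unfold TT, TTlo.
  assert (0 <= (B1 a - lo1) * w^3) by (apply Rmult_le_pos; [lra | apply pow_le; auto]).
  assert (0 <= (B2 a - lo2) * (K * w^2)) by (apply Rmult_le_pos; [lra | apply Rmult_le_pos; [auto | apply pow_le; auto]]).
  assert (0 <= (B3 a - lo3) * ((K*(K+1)/2) * w)) by (apply Rmult_le_pos; [lra | apply Rmult_le_pos; [|auto]];
     unfold Rdiv; apply Rmult_le_pos; [apply Rmult_le_pos; lra | lra]).
  assert (0 <= (B4 a - lo4) * (K*(K+1)*(K+2)/6)) by (apply Rmult_le_pos; [lra|];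
     unfold Rdiv; apply Rmult_le_pos; [repeat apply Rmult_le_pos; lra | lra]).
  nra.
Qed.

Lemma TTlo_split s w : TTlo (4 + s) w = Acoef0 w + Acoef1 w * s + Acoef2 w * s^2 + Acoef3 w * s^3.
Proof. unfold TTlo, Acoef0, Acoef1, Acoef2, Acoef3, lo1, lo2, lo3, lo4. field. Qed.

Lemma pos_factor a k w n T : 0 < a -> 0 < w -> 0 <= T -> 0 <= a^k * INR (fact k) / w^n * T.
Proof.
  intros Ha Hw HT. apply Rmult_le_pos; [|auto].
  unfold Rdiv. apply Rmult_le_pos.
  - apply Rmult_le_pos; [left; apply pow_lt; auto | apply pos_INR].
  - left. apply Rinv_0_lt_compat. apply pow_lt; auto.
Qed.

Lemma neg_factor a k w n T : 0 < a -> 0 < w -> T < 0 -> a^k * INR (fact k) / w^n * T < 0.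
Proof.
  intros Ha Hw HT.
  assert (0 < a^k * INR (fact k) / w^n).
  { unfold Rdiv. apply Rmult_lt_0_compat.
    - apply Rmult_lt_0_compat; [apply pow_lt; auto | apply lt_0_INR; apply lt_O_fact].
    - apply Rinv_0_lt_compat. apply pow_lt; auto. }
  nra.
Qed.

Lemma Fk_nonneg_I1 a xs : Qa a = 0 -> l1 <= a <= u1 -> xL <= xs -> Hr a xs = 0 ->
  forall x, xs <= x <= 0 -> forall k, 0 <= Fk a k x.
Proof.
  intros HQ Ha HxL Hxs x Hx k.
  pose proof l1_pos as Hl1.
  assert (Hw : 1 <= 1 - a*x <= Wb).
  { rewrite Wb_eq. split; [nra|]. assert (a * (-x) <= u1 * (- xL)) by (apply Rmult_le_compat; lra). lra. }
  assert (Hw0 : 1 - a*x <> 0) by lra.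
  pose proof (n_B0lo a Ha). pose proof (n_B1lo a Ha). pose proof (n_B2lo a Ha).
  pose proof (n_B3lo a Ha). pose proof (n_B4lo a Ha).
  set (w := 1 - a*x) in *.
  assert (Hwl : w1 <= w <= Wb) by (unfold w1; lra).
  destruct k as [|[|[|k]]].
  - replace (Fk a 0 x) with ((B0 a * w^4 + B1 a * w^3 + B2 a * w^2 + B3 a * w + B4 a) / w^4)
      by (unfold Fk, w; simpl fact; simpl INR; field; auto).
    pose proof (n_V0 w Hwl) as HV.
    assert (0 <= (B0 a - lo0) * w^4) by (apply Rmult_le_pos; [lra | apply pow_le; lra]).
    assert (0 <= (B1 a - lo1) * w^3) by (apply Rmult_le_pos; [lra | apply pow_le; lra]).
    assert (0 <= (B2 a - lo2) * w^2) by (apply Rmult_le_pos; [lra | apply pow_le; lra]).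
    assert (0 <= (B3 a - lo3) * w) by (apply Rmult_le_pos; lra).
    unfold Rdiv. apply Rmult_le_pos; [nra|]. left. apply Rinv_0_lt_compat, pow_lt. lra.
  - rewrite Fk1_eq by auto. fold w.
    assert (0 <= Hr a x).
    { destruct (Req_dec x xs) as [->|hne]; [lra|]. left. rewrite <- Hxs. apply Hr_incr; auto. lra. }
    unfold Rdiv. apply Rmult_le_pos; auto. left. apply Rinv_0_lt_compat, pow_lt. lra.
  - rewrite Fk_TT by auto. fold w. rewrite Rplus_0_r.
    replace (INR 2 + 1) with 3 by (simpl; lra).
    apply pos_factor; [lra | lra |].
    pose proof (n_T3 w Hwl).
    assert (TTlo 3 w <= TT a 3 w) by (apply TT_ge_lo; lra). lra.
  - rewrite Fk_TT by auto. fold w. rewrite Rplus_0_r.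
    replace (INR (S (S (S k))) + 1) with (4 + INR k) by (rewrite !S_INR; ring).
    apply pos_factor; [lra | lra |].
    pose proof (pos_INR k) as Hk.
    assert (TTlo (4 + INR k) w <= TT a (4 + INR k) w) by (apply TT_ge_lo; lra).
    rewrite TTlo_split in H4.
    pose proof (n_A0 w Hwl). pose proof (n_A1 w Hwl). pose proof (n_A2 w Hwl). pose proof (n_A3 w Hwl).
    assert (0 <= Acoef1 w * INR k) by (apply Rmult_le_pos; lra).
    assert (0 <= Acoef2 w * INR k ^ 2) by (apply Rmult_le_pos; [lra | apply pow_le; lra]).
    assert (0 <= Acoef3 w * INR k ^ 3) by (apply Rmult_le_pos; [lra | apply pow_le; lra]).
    lra.
Qed.

Lemma Fk9_zero a : (l2 <= a <= u2) \/ (l4 <= a <= u4) -> Fk a 9 0 < 0.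
Proof.
  intros Ha. rewrite Fk_TT by lra. rewrite Rplus_0_r.
  replace (1 - a*0) with 1 by ring. replace (INR 9 + 1) with 10 by (simpl; lra).
  apply neg_factor; [unfold l2, l4 in *; lra | lra |].
  destruct Ha as [Ha|Ha]; [pose proof (n_r2 a Ha) | pose proof (n_r4 a Ha)]; lra.
Qed.

Lemma Fk9_m1 a : l3 <= a <= u3 -> Fk a 9 (-1) < 0.
Proof.
  intros Ha. unfold l3, u3 in Ha. rewrite Fk_TT by lra. rewrite Rplus_0_r.
  replace (1 - a*(-1)) with (1 + a) by ring. replace (INR 9 + 1) with 10 by (simpl; lra).
  apply neg_factor; [lra | lra |].
  pose proof (n_r3 a ltac:(unfold l3, u3; lra)). lra.
Qed.

Lemma am_to_Fk c a x : 0 < a -> x <= 0 -> Qa a = 0 ->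
  (forall y, poly_eval c 4 y = poly_eval (cc a) 4 y) ->
  abs_mono_at (poly_eval c 4) (fun z => (1 - a*z)^4) x -> forall k, 0 <= Fk a k x.
Proof.
  intros Ha Hx HQ Hc [d [Hd [F [H0 [HD Hpos]]]]] k.
  set (d' := Rmin d (1 / (2*a))).
  assert (Hd' : 0 < d') by (unfold d'; apply Rmin_pos; [auto | apply Rdiv_lt_0_compat; lra]).
  assert (Hball : forall y, Rabs (y - x) < d' -> Rabs (y - x) < d /\ 1/2 < 1 - a*y).
  { intros y Hy. split.
    - eapply Rlt_le_trans; [apply Hy | apply Rmin_l].
    - assert (Hy2 : Rabs (y - x) < 1 / (2*a)) by (eapply Rlt_le_trans; [apply Hy | apply Rmin_r]).
      assert (Hq1 : y - x < 1 / (2*a)) by (eapply Rle_lt_trans; [apply Rle_abs | auto]).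
      assert (Hq2 : a * (y - x) < a * (1 / (2*a))) by (apply Rmult_lt_compat_l; auto).
      replace (a * (1 / (2*a))) with (1/2) in Hq2 by (field; lra). nra. }
  assert (E : F k x = Fk a k x).
  { apply (uniq_chain F (Fk a) x d' Hd').
    - intros y Hy. destruct (Hball y Hy) as [Hy1 Hy2].
      rewrite H0 by (auto; apply pow_nonzero; lra).
      rewrite Fk0_eq by (auto; lra). rewrite Hc. reflexivity.
    - intros j y Hy. apply HD. apply Hball; auto.
    - intros j y Hy. apply Fk_deriv. destruct (Hball y Hy); lra.
    - replace (x - x) with 0 by ring. rewrite Rabs_R0. auto. }
  rewrite <- E. apply Hpos.
Qed.

Lemma Fk_am a x : 0 < a -> x <= 0 -> Qa a = 0 -> (forall k, 0 <= Fk a k x) ->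
  abs_mono_at (poly_eval (cc a) 4) (fun z => (1 - a*z)^4) x.
Proof.
  intros Ha Hx HQ Hk. exists (1 / (2*a)). split; [apply Rdiv_lt_0_compat; lra|].
  exists (Fk a).
  assert (Hball : forall y, Rabs (y - x) < 1/(2*a) -> 1/2 < 1 - a*y).
  { intros y Hy.
    assert (Hq1 : y - x < 1 / (2*a)) by (eapply Rle_lt_trans; [apply Rle_abs | auto]).
    assert (Hq2 : a * (y - x) < a * (1 / (2*a))) by (apply Rmult_lt_compat_l; auto).
    replace (a * (1 / (2*a))) with (1/2) in Hq2 by (field; lra). nra. }
  split; [|split].
  - intros y Hy _. apply Fk0_eq; auto. pose proof (Hball y Hy). lra.
  - intros k y Hy. apply Fk_deriv. pose proof (Hball y Hy). lra.
  - auto.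
Qed.

Lemma Hr_root a : l1 <= a <= u1 -> exists x, xL <= x <= xR /\ Hr a x = 0.
Proof.
  intros Ha.
  assert (Hc : continuity (fun x => Hr a x)) by (unfold Hr; reg).
  destruct (IVT (fun x => Hr a x) xL xR Hc) as [x [Hx1 Hx2]].
  - unfold xL, xR; lra.
  - pose proof (n_HL a Ha). lra.
  - apply n_HR; auto.
  - exists x. auto.
Qed.

Lemma root_is_q12 a x : Qa a = 0 -> Hr a x = 0 -> q12 x = 0.
Proof.
  intros HQ HH. pose proof (id3 a x) as E. rewrite HQ, HH in E. lra.
Qed.

Lemma q12_unique x y : xL <= x <= xR -> xL <= y <= xR -> q12 x = 0 -> q12 y = 0 -> x = y.
Proof.
  intros Hx Hy Hqx Hqy. destruct (Rtotal_order x y) as [h|[h|h]]; auto.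
  - pose proof (q12_decr x y ltac:(lra) h ltac:(lra)). lra.
  - pose proof (q12_decr y x ltac:(lra) h ltac:(lra)). lra.
Qed.

Theorem mainTheorem19 :
  exists xs : R,
    q12 xs = 0 /\ (forall y : R, q12 y = 0 -> xs <= y) /\
    is_lub (Rhat_set 4 5) (- xs).
Proof.
  assert (Hc : continuity (fun z => - Qa z)) by (unfold Qa; reg).
  destruct (IVT (fun z => - Qa z) l1 u1 Hc) as [as_ [Has HQ0]].
  { unfold l1, u1; lra. }
  { pose proof (n_Ql1 l1 ltac:(lra)). lra. }
  { apply n_Qu1; lra. }
  assert (HQ : Qa as_ = 0) by lra. clear HQ0.
  destruct (Hr_root as_ Has) as [xs [Hxs HH]].
  pose proof (root_is_q12 _ _ HQ HH) as Hq.
  assert (HxL : xL < xs).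
  { destruct (Req_dec xs xL) as [e|e]; [|lra]. rewrite e in HH. pose proof (n_HL as_ Has). lra. }
  assert (HxR : xR < 0) by (unfold xR; lra).
  exists xs. split; [auto | split].
  - intros y Hy. destruct (Rle_dec xs y) as [h|h]; auto. exfalso.
    destruct (Rle_dec y xL) as [h2|h2].
    + pose proof (q12_pos_left y h2). lra.
    + pose proof (q12_decr y xs ltac:(lra) ltac:(lra) ltac:(lra)). lra.
  - split.
    + intros r [Hr0 | [Hr0 [c [a [Hpi Ham]]]]]; [lra|].
      destruct (pihat_coeffs c a Hpi) as [C0 [C1 [C2 [C3 [C4 HQa]]]]].
      assert (Hc' : forall y, poly_eval c 4 y = poly_eval (cc a) 4 y).
      { intros y. rewrite !poly_eval4, C0, C1, C2, C3, C4. reflexivity. }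
      destruct (Rle_dec r (- xs)) as [h|h]; auto. exfalso.
      destruct (Q_roots a HQa) as [Ha|[Ha|[Ha|Ha]]].
      * pose proof l1_pos.
        destruct (Hr_root a Ha) as [x1 [Hx1 HH1]].
        pose proof (q12_unique x1 xs Hx1 ltac:(lra) (root_is_q12 _ _ HQa HH1) Hq) as E1.
        subst x1.
        set (x0 := Rmax (- r) xL).
        assert (Hx0 : - r <= x0 <= 0 /\ xL <= x0 < xs).
        { unfold x0, Rmax. destruct (Rle_dec (- r) xL); lra. }
        assert (HHx0 : Hr a x0 < 0) by (rewrite <- HH1; apply Hr_incr; lra).
        pose proof (am_to_Fk c a x0 ltac:(lra) ltac:(lra) HQa Hc' (Ham x0 ltac:(lra)) 1) as K.
        rewrite Fk1_eq in K by nra.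
        assert (Hw : 0 < 1 - a*x0) by nra.
        assert (0 < / (1 - a*x0)^5) by (apply Rinv_0_lt_compat, pow_lt; auto).
        unfold Rdiv in K. nra.
      * unfold l2, u2 in Ha.
        pose proof (am_to_Fk c a 0 ltac:(lra) ltac:(lra) HQa Hc' (Ham 0 ltac:(lra)) 9) as K.
        pose proof (Fk9_zero a ltac:(left; unfold l2, u2; lra)). lra.
      * unfold l3, u3 in Ha.
        assert (- r <= -1) by (destruct Hxs as [_ Hxs2]; unfold xR in Hxs2; lra).
        pose proof (am_to_Fk c a (-1) ltac:(lra) ltac:(lra) HQa Hc' (Ham (-1) ltac:(lra)) 9) as K.
        pose proof (Fk9_m1 a ltac:(unfold l3, u3; lra)). lra.
      * unfold l4, u4 in Ha.
        pose proof (am_to_Fk c a 0 ltac:(lra) ltac:(lra) HQa Hc' (Ham 0 ltac:(lra)) 9) as K.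
        pose proof (Fk9_zero a ltac:(right; unfold l4, u4; lra)). lra.
    + intros b Hb. apply Hb. right. split; [lra|].
      exists (cc as_), as_. split; [apply pihat_of_root; auto|].
      intros x Hx. pose proof l1_pos.
      apply Fk_am; [lra | lra | auto |].
      apply (Fk_nonneg_I1 as_ xs); auto; lra.
Qed.
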